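(* Let $G$ be a group and $(\rho,V)$ a linear representation of $G$ on a finite-dimensional vector space $V$ over a field $k$. Let $Y$ be a $k$-subspace of $V$ and set \[\mu=\inf_{A\in\mathcal{P}_{\mathrm{fin}}(G)\setminus\{\emptyset\}}\frac{\dim(A\cdot Y)}{|A|}.\] Then either $\mu=0$, or for every $\lambda\in[0,\mu]$ there exists a finite subgroup $H$ of $G$ containing $G_Y$ such that \[\dim(A\cdot Y)\geq\lambda|A|+\dim(H\cdot Y)-\lambda|H|\geq\lambda|A|+\dim(Y)-\lambda|H|\] for every nonempty finite subset $A$ of $G$.
   Context: $g\cdot v=\rho(g)v$. For $A\subset G$, $A\cdot Y$ denotes the $k$-subspace spanned by $\{a\cdot v\mid a\in A,v\in Y\}$, and $\dim(A\cdot Y)$ its dimension. $G_Y=\{g\in G\mid g\cdot Y=Y\}$. $\mathcal{P}_{\mathrm{fin}}(G)$ is the set of finite subsets of $G$. *)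

(* Defs.v *)
From HB Require Import structures.
From mathcomp Require Import all_boot all_order all_algebra.
From mathcomp Require Import finmap.
From mathcomp Require Import classical_sets reals.
Set Implicit Arguments. Unset Strict Implicit. Unset Printing Implicit Defensive.
Import Order.TTheory GRing.Theory Num.Theory.

Local Open Scope fset_scope.

Definition is_representation (G : groupType) (k : fieldType) (V : vectType k)
    (rho : G -> 'End(V)) : Prop :=
  rho 1%g = \1%VF /\ forall g h : G, rho (g * h)%g = (rho g \o rho h)%VF.

Definition act_span (G : groupType) (k : fieldType) (V : vectType k)
    (rho : G -> 'End(V)) (A : {fset G}) (Y : {vspace V}) : {vspace V} :=
  (\sum_(a <- A) (rho a @: Y))%VS.

Definition setwise_stab (G : groupType) (k : fieldType) (V : vectType k)
    (rho : G -> 'End(V)) (Y : {vspace V}) : set G :=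
  [set g | (rho g @: Y)%VS = Y]%classic.

Definition is_fin_subgroup (G : groupType) (H : {fset G}) : Prop :=
  1%g \in H /\ (forall x y, x \in H -> y \in H -> (x * y)%g \in H)
  /\ (forall x, x \in H -> (x^-1)%g \in H).

Definition mu_inf (R : realType) (G : groupType) (k : fieldType) (V : vectType k)
    (rho : G -> 'End(V)) (Y : {vspace V}) : R :=
  inf [set ((\dim (act_span rho A Y))%:R / (#|` A|)%:R : R)%R
      | A in [set A : {fset G} | A != fset0]]%classic.

(* Main.v *)
Require Import Defs.
From HB Require Import structures.
From mathcomp Require Import all_boot all_order all_algebra.
From mathcomp Require Import finmap.
From mathcomp Require Import classical_sets reals.
Import Order.TTheory GRing.Theory Num.Theory.
Local Open Scope ring_scope.
Local Open Scope fset_scope.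
Set Implicit Arguments. Unset Strict Implicit.

Lemma sumv_seq_sub (k : fieldType) (V : vectType k) (T : eqType) (s : seq T)
   (F : T -> {vspace V}) (U : {vspace V}) :
  (\sum_(a <- s) F a <= U)%VS = all (fun a => (F a <= U)%VS) s.
Proof.
elim: s => [|x s IH]; first by rewrite big_nil sub0v.
by rewrite big_cons subv_add IH.
Qed.

Lemma span_subP (G : groupType) (k : fieldType) (V : vectType k)
    (rho : G -> 'End(V)) (A : {fset G}) (Y U : {vspace V}) :
  reflect (forall a, a \in A -> (rho a @: Y <= U)%VS) (act_span rho A Y <= U)%VS.
Proof. rewrite /act_span sumv_seq_sub; exact: allP. Qed.

Lemma span_sup (G : groupType) (k : fieldType) (V : vectType k)
    (rho : G -> 'End(V)) (A : {fset G}) (Y : {vspace V}) a :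
  a \in A -> (rho a @: Y <= act_span rho A Y)%VS.
Proof. by move=> aA; move/span_subP: (subvv (act_span rho A Y)); apply. Qed.

Lemma span_mono (G : groupType) (k : fieldType) (V : vectType k)
    (rho : G -> 'End(V)) (A B : {fset G}) (Y : {vspace V}) :
  A `<=` B -> (act_span rho A Y <= act_span rho B Y)%VS.
Proof. by move=> /fsubsetP AB; apply/span_subP => a /AB; apply: span_sup. Qed.

Lemma span_U (G : groupType) (k : fieldType) (V : vectType k)
    (rho : G -> 'End(V)) (A B : {fset G}) (Y : {vspace V}) :
  act_span rho (A `|` B) Y = (act_span rho A Y + act_span rho B Y)%VS.
Proof.
apply: subv_anti; apply/andP; split.
  apply/span_subP => a /fsetUP [] aA.
    by apply: subv_trans (addvSl _ _); apply: span_sup.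
  by apply: subv_trans (addvSr _ _); apply: span_sup.
by rewrite subv_add !span_mono // ?fsubsetUl ?fsubsetUr.
Qed.

Lemma span_I (G : groupType) (k : fieldType) (V : vectType k)
    (rho : G -> 'End(V)) (A B : {fset G}) (Y : {vspace V}) :
  (act_span rho (A `&` B) Y <= act_span rho A Y :&: act_span rho B Y)%VS.
Proof. by rewrite subv_cap !span_mono // ?fsubsetIl ?fsubsetIr. Qed.

Lemma dim_submod (G : groupType) (k : fieldType) (V : vectType k)
    (rho : G -> 'End(V)) (A B : {fset G}) (Y : {vspace V}) :
  (\dim (act_span rho (A `|` B) Y) + \dim (act_span rho (A `&` B) Y)
    <= \dim (act_span rho A Y) + \dim (act_span rho B Y))%N.
Proof. by rewrite span_U -[X in (_ <= X)%N]dimv_sum_cap leq_add2l; apply: dimvS; apply: span_I. Qed.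

Lemma dim_limg_le (k : fieldType) (V : vectType k) (f : 'End(V)) (U : {vspace V}) :
  (\dim (f @: U) <= \dim U)%N.
Proof. by rewrite -[X in (_ <= X)%N](limg_ker_dim f U) leq_addl. Qed.

Definition lmul (G : groupType) (g : G) (A : {fset G}) : {fset G} :=
  [fset (g * a)%g | a in A].
Arguments lmul {G}.

Lemma lmul_card (G : groupType) (g : G) (A : {fset G}) : #|` lmul g A| = #|` A|.
Proof. by rewrite /lmul card_imfset //=; apply: mulgI. Qed.

Lemma lmulK (G : groupType) (g : G) (A : {fset G}) : lmul (g^-1)%g (lmul g A) = A.
Proof.
apply/fsetP => x; apply/imfsetP/idP => [[y /imfsetP [z zA ->] ->]|xA] /=.
  by rewrite mulKg.
by exists (g * x)%g; [apply/imfsetP; exists x | rewrite mulKg].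
Qed.

Lemma mem_lmul (G : groupType) (g : G) (A : {fset G}) x :
  ((g * x)%g \in lmul g A) = (x \in A).
Proof.
apply/imfsetP/idP => [[y yA /mulgI ->] //|xA]; by exists x.
Qed.

Lemma span_lmul_sub (G : groupType) (k : fieldType) (V : vectType k)
    (rho : G -> 'End(V)) (Y : {vspace V}) g A :
  is_representation rho ->
  (act_span rho (lmul g A) Y <= rho g @: act_span rho A Y)%VS.
Proof.
move=> [_ rhoM]; apply/span_subP => x /imfsetP [a aA ->].
by rewrite rhoM limg_comp limgS // span_sup.
Qed.

Lemma dim_lmul_le (G : groupType) (k : fieldType) (V : vectType k)
    (rho : G -> 'End(V)) (Y : {vspace V}) g A :
  is_representation rho ->
  (\dim (act_span rho (lmul g A) Y) <= \dim (act_span rho A Y))%N.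
Proof.
move=> rr; have := dim_limg_le (rho g) (act_span rho A Y); apply: leq_trans.
by apply: dimvS; apply: span_lmul_sub.
Qed.

Lemma dim_lmul (G : groupType) (k : fieldType) (V : vectType k)
    (rho : G -> 'End(V)) (Y : {vspace V}) g A :
  is_representation rho ->
  \dim (act_span rho (lmul g A) Y) = \dim (act_span rho A Y).
Proof.
move=> rr; apply/eqP; rewrite eqn_leq dim_lmul_le //=.
by rewrite -[X in (\dim (act_span rho X Y) <= _)%N](lmulK g A) dim_lmul_le.
Qed.

From mathcomp Require Import lra.

Lemma seq_argmin (R : realType) (T : eqType) (s : seq T) (F : T -> R) :
  s != [::] -> exists2 x, x \in s & forall y, y \in s -> F x <= F y.
Proof.
elim: s => [//|a s IH] _.
case: (eqVneq s [::]) => [->|sne].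
  by exists a; rewrite ?mem_seq1 // => y; rewrite mem_seq1 => /eqP ->.
have [x xs xmin] := IH sne.
case: (lerP (F a) (F x)) => [le|lt].
  exists a; first by rewrite mem_head.
  move=> y; rewrite in_cons => /orP [/eqP -> //|ys].
  exact: le_trans le (xmin _ ys).
exists x; first by rewrite in_cons xs orbT.
move=> y; rewrite in_cons => /orP [/eqP ->|ys]; last exact: xmin.
exact: ltW.
Qed.

Local Open Scope ring_scope.

Definition fval (R : realType) (G : groupType) (k : fieldType) (V : vectType k)
    (rho : G -> 'End(V)) (Y : {vspace V}) (lam : R) (A : {fset G}) : R :=
  (\dim (act_span rho A Y))%:R - lam * (#|` A|)%:R.

Lemma fval_submod (R : realType) (G : groupType) (k : fieldType) (V : vectType k)
    (rho : G -> 'End(V)) (Y : {vspace V}) (lam : R) (A B : {fset G}) :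
  fval rho Y lam (A `|` B) + fval rho Y lam (A `&` B)
    <= fval rho Y lam A + fval rho Y lam B.
Proof.
rewrite /fval.
have h1 : ((\dim (act_span rho (A `|` B) Y))%:R + (\dim (act_span rho (A `&` B) Y))%:R
   <= (\dim (act_span rho A Y))%:R + (\dim (act_span rho B Y))%:R :> R).
  by rewrite -!natrD ler_nat dim_submod.
have h2 : lam * (#|` A `|` B|)%:R + lam * (#|` A `&` B|)%:R
   = lam * (#|` A|)%:R + lam * (#|` B|)%:R.
  by rewrite -!mulrDr -!natrD cardfsUI.
lra.
Qed.

Lemma fval_union (R : realType) (G : groupType) (k : fieldType) (V : vectType k)
    (rho : G -> 'End(V)) (Y : {vspace V}) (lam : R) (m : R) (A B : {fset G}) :
  (forall C, C != fset0 -> m <= fval rho Y lam C) ->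
  fval rho Y lam A = m -> fval rho Y lam B = m -> A `&` B != fset0 ->
  fval rho Y lam (A `|` B) = m.
Proof.
move=> hm hA hB hI.
have h := fval_submod rho Y lam A B.
have h1 := hm _ hI.
have h2 : A `|` B != fset0.
  case/fset0Pn: hI => x /fsetIP [xA _]; apply/fset0Pn; exists x.
  by apply/fsetUP; left.
have h3 := hm _ h2.
lra.
Qed.

Lemma mem_nnil (T : eqType) (s : seq T) x : x \in s -> s != [::].
Proof. by case: s. Qed.

Lemma fval_lmul (R : realType) (G : groupType) (k : fieldType) (V : vectType k)
    (rho : G -> 'End(V)) (Y : {vspace V}) (lam : R) g A :
  is_representation rho -> fval rho Y lam (lmul g A) = fval rho Y lam A.
Proof. by move=> rr; rewrite /fval dim_lmul // lmul_card. Qed.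

Lemma finite_case (R : realType) (G : groupType) (k : fieldType) (V : vectType k)
    (rho : G -> 'End(V)) (Y : {vspace V}) (E : {fset G}) (lam : R) :
  is_representation rho -> (forall g, g \in E) -> 0 <= lam ->
  exists H, is_fin_subgroup H /\ (forall g, setwise_stab rho Y g -> g \in H) /\
    (forall A, A != fset0 -> fval rho Y lam H <= fval rho Y lam A) /\
    (\dim Y <= \dim (act_span rho H Y))%N.
Proof.
move=> rr hE hlam.
set F := fval rho Y lam.
have allsub : forall B : {fset G}, B \in fpowerset E.
  by move=> B; rewrite fpowersetE; apply/fsubsetP => x _; apply: hE.
pose S0 := [seq B <- fpowerset E | B != fset0].
have : S0 != [::].
  apply: (@mem_nnil _ _ [fset (1%g : G)]); rewrite mem_filter allsub andbT.
  by apply/fset0Pn; exists 1%g; rewrite in_fset1.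
move=> /(seq_argmin F) [A0 A0S hA0].
rewrite mem_filter in A0S; case/andP: A0S => A0ne _.
have hmin : forall C, C != fset0 -> F A0 <= F C.
  by move=> C Cne; apply: hA0; rewrite mem_filter Cne allsub.
set m := F A0 in hmin.
pose S1 := filter (fun B : {fset G} => ((1%g : G) \in B) && (F B == m)) (fpowerset E).
have : S1 != [::].
  case/fset0Pn: A0ne => a aA0.
  apply: (@mem_nnil _ _ (lmul (a^-1)%g A0)); rewrite mem_filter allsub andbT.
  by rewrite -(mulVg a) mem_lmul aA0 /= /F fval_lmul // eqxx.
move=> /(seq_argmin (fun B : {fset G} => - (#|` B|)%:R : R)) [M MS hM].
rewrite mem_filter in MS; case/andP: MS => /andP [M1 /eqP FM] _.
have ne1 : forall B : {fset G}, (1%g : G) \in B -> B != fset0.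
  by move=> B B1; apply/fset0Pn; exists 1%g.
have sub : forall B : {fset G}, (1%g : G) \in B -> F B = m -> B `<=` M.
  move=> B B1 FB.
  have FU : F (B `|` M) = m.
    apply: fval_union => //; apply: ne1; apply/fsetIP; split => //.
  have := hM (B `|` M); rewrite mem_filter allsub andbT FU eqxx.
  have -> : (1%g : G) \in B `|` M by apply/fsetUP; left.
  move=> /(_ isT); rewrite lerN2 ler_nat => hc.
  have : M == B `|` M by rewrite eqEfcard fsubsetUr hc.
  by move/eqP => ->; apply: fsubsetUl.
have invmul : forall x y : G, x \in M -> y \in M -> (x^-1 * y)%g \in M.
  move=> x y xM yM.
  have : lmul (x^-1)%g M `<=` M.
    apply: sub; last by rewrite /F fval_lmul. have := mem_lmul (x^-1)%g M x; rewrite mulVg xM => h; exact h.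
  by move/fsubsetP; apply; rewrite mem_lmul.
have invM : forall x : G, x \in M -> (x^-1)%g \in M.
  by move=> x xM; have := invmul x 1%g xM M1; rewrite mulg1.
exists M; split; [|split; [|split]].
- split => //; split; last exact: invM.
  move=> x y xM yM; have := invmul (x^-1)%g y; rewrite invgK; apply => //.
  exact: invM.
- move=> g; rewrite /setwise_stab /= => hg.
  pose M' := M `|` [fset (x * g)%g | x in M].
  have sp : (act_span rho M' Y <= act_span rho M Y)%VS.
    apply/span_subP => y /fsetUP [yM|/imfsetP [x xM ->]]; first exact: span_sup.
    by case: rr => _ rM; rewrite rM limg_comp hg span_sup.
  have d1 : ((\dim (act_span rho M' Y))%:R <= (\dim (act_span rho M Y))%:R :> R).
    by rewrite ler_nat dimvS.
  have c1 : lam * (#|` M|)%:R <= lam * (#|` M'|)%:R.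
    by rewrite ler_wpM2l // ler_nat fsubset_leq_card // fsubsetUl.
  have M'1 : (1%g : G) \in M' by apply/fsetUP; left.
  have h1 := hmin _ (ne1 _ M'1).
  have FM' : F M' = m by move: FM h1; rewrite /F /fval; lra.
  move/fsubsetP: (sub _ M'1 FM'); apply; apply/fsetUP; right.
  by apply/imfsetP; exists 1%g => //; rewrite mul1g.
- by move=> A Ane; rewrite FM; apply: hmin.
- apply: dimvS; case: rr => r1 _.
  by rewrite -[X in (X <= _)%VS](lim1g Y) -r1 span_sup.
Qed.

From mathcomp Require Import boolp.

Lemma big_fsets (G : groupType) :
  ~ (exists E : {fset G}, forall g, g \in E) -> forall n, exists A : {fset G}, #|` A| = n.
Proof.
move=> hE; elim=> [|n [A hA]]; first by exists fset0; rewrite cardfs0.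
case: (pselect (exists g, g \notin A)) => [[g gA]|no].
  by exists (g |` A); rewrite cardfsU1 gA hA.
exfalso; apply: hE; exists A => g; apply/negPn/negP => gA; apply: no; by exists g.
Qed.

Lemma mu_zero (R : realType) (G : groupType) (k : fieldType) (V : vectType k)
    (rho : G -> 'End(V)) (Y : {vspace V}) :
  ~ (exists E : {fset G}, forall g, g \in E) -> mu_inf R rho Y = 0.
Proof.
move=> hE; rewrite /mu_inf.
set S := (X in inf X).
have lb : lbound S 0.
  by move=> _ [A _ <-]; rewrite divr_ge0 ?ler0n.
have Sne : nonempty S.
  exists ((\dim (act_span rho [fset (1%g : G)] Y))%:R / (#|` [fset (1%g : G)]|)%:R).
  exists [fset (1%g : G)] => //; rewrite /=; apply/fset0Pn; exists 1%g; by rewrite in_fset1.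
have h0 : 0 <= inf S by exact: (lb_le_inf Sne lb).
have hub : forall A : {fset G}, A != fset0 ->
    inf S <= (\dim (act_span rho A Y))%:R / (#|` A|)%:R.
  by move=> A Ane; apply: ge_inf; [exists 0 | exists A].
apply/eqP; rewrite eq_le h0 andbT; rewrite leNgt; apply/negP => hpos.
set d := \dim (fullv : {vspace V}).
have [A hA] := big_fsets hE (Num.Def.trunc (d%:R / inf S)).+1.
have Ane : A != fset0 by rewrite -cardfs_gt0 hA.
have npos : 0 < (#|` A|)%:R :> R by rewrite ltr0n cardfs_gt0.
have := hub A Ane; rewrite ler_pdivlMr // => h1.
have h2 : ((\dim (act_span rho A Y))%:R <= d%:R :> R) by rewrite ler_nat dimvS // subvf.
have := truncnS_gt (d%:R / inf S); rewrite ltr_pdivrMr // -hA => h3.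
move: h1 h2 h3; rewrite [_ * inf S]mulrC; lra.
Qed.

Unset Implicit Arguments. Set Strict Implicit.

Theorem mainTheorem12 (R : realType) (G : groupType) (k : fieldType)
    (V : vectType k) (rho : G -> 'End(V)) (Y : {vspace V}) :
  is_representation rho ->
  mu_inf R rho Y = 0 \/
  (forall lam : R, 0 <= lam -> lam <= mu_inf R rho Y ->
    exists H : {fset G},
      is_fin_subgroup H /\
      (forall g, setwise_stab rho Y g -> g \in H) /\
      (forall A : {fset G}, A != fset0 ->
         ((\dim (act_span rho A Y))%:R
            >= lam * (#|` A|)%fset%:R + (\dim (act_span rho H Y))%:R - lam * (#|` H|)%fset%:R)
         /\ (lam * (#|` A|)%fset%:R + (\dim (act_span rho H Y))%:R - lam * (#|` H|)%fset%:R
            >= lam * (#|` A|)%fset%:R + (\dim Y)%:R - lam * (#|` H|)%fset%:R))).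
Proof.
move=> rr.
case: (pselect (exists E : {fset G}, forall g, g \in E)) => [[E hE]|nE];
  last by left; apply: mu_zero.
right => lam hlam _.
have [H [sg [stab [hmin hdim]]]] := @finite_case R G k V rho Y E lam rr hE hlam.
exists H; split => //; split => //; move=> A Ane; split.
  by have := hmin A Ane; rewrite /fval; lra.
have : ((\dim Y)%:R <= (\dim (act_span rho H Y))%:R :> R) by rewrite ler_nat.
lra.
Qed.
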